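(* Let $\mathcal{M}$ be a mechanism with $n$ agents and let $D=(\mathbf{d}^0,\mathbf{d}^1,\dots,\mathbf{d}^T)$ be generated by best-response dynamics with random player order. Fix an agent $i$, a property $P_1$ of the others' declarations $\mathbf{d}_{-i}$, and a property $P_2$ of agent $i$'s declaration $d_i$. Suppose that for every profile, if $P_1(\mathbf{d}_{-i})$ is false then every best response $d_i$ of agent $i$ to $\mathbf{d}_{-i}$ satisfies $P_2(d_i)$. Then for every $\epsilon>0$, if $T>\epsilon^{-1}n$, with probability at least $1-e^{-T\epsilon^2/32n}$ there are at least $(\frac12-\epsilon)T$ steps $t$ for which $P_1(\mathbf{d}^t_{-i})$ or $P_2(d_i^t)$ is true.
   Context: Best-response dynamics with random player order: starting from an initial profile $\mathbf{d}^0$, at each step $t=1,\dots,T$ one agent is chosen independently and uniformly at random from the $n$ agents; that agent may change his declaration to a best response, i.e. a declaration $d\in\arg\max_d u_i(d,\mathbf{d}_{-i}^{t-1})$ maximizing his utility given the others' current declarations (he keeps his previous declaration if he cannot improve his utility); all other agents keep their declarations. *)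

(* Defs.v *)
From HB Require Import structures.
From mathcomp Require Import all_boot all_order all_algebra.
From mathcomp Require Import reals.
From mathcomp Require Import sequences exp.
Set Implicit Arguments. Unset Strict Implicit. Unset Printing Implicit Defensive.
Import Order.TTheory GRing.Theory Num.Theory.
Local Open Scope ring_scope.

Definition profile (A : Type) (n : nat) := 'I_n -> A.

Definition upd (A : Type) (n : nat) (p : profile A n) (j : 'I_n) (d : A)
  : profile A n := fun k => if k == j then d else p k.

Definition best_response (R : realType) (A : Type) (n : nat)
  (u : 'I_n -> profile A n -> R) (j : 'I_n) (p : profile A n) (d : A) : Prop :=
  forall d' : A, u j (upd p j d') <= u j (upd p j d).

Definition br_step (R : realType) (A : Type) (n : nat)
  (u : 'I_n -> profile A n -> R) (j : 'I_n) (p q : profile A n) : Prop :=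
  [/\ forall k, k != j -> q k = p k,
      best_response u j p (q j)
    & best_response u j p (p j) -> q j = p j].

(* The sample space is the set of sequences w of chosen agents (w t is the
   agent chosen at step t.+1), drawn uniformly from {ffun 'I_T -> 'I_n}.
   D w t is the profile d^t along the realisation w.  The choice among best
   responses may be arbitrary (adversarial), but non-anticipating: d^t only
   depends on the agents chosen at steps 1..t. *)
Definition br_dynamics (R : realType) (A : Type) (n T : nat)
  (u : 'I_n -> profile A n -> R) (d0 : profile A n)
  (D : {ffun 'I_T -> 'I_n} -> nat -> profile A n) : Prop :=
  [/\ forall w : {ffun 'I_T -> 'I_n}, D w 0 = d0,
      forall (w : {ffun 'I_T -> 'I_n}) (t : 'I_T), br_step u (w t) (D w t) (D w t.+1)
    & forall (w w' : {ffun 'I_T -> 'I_n}) (t : nat), (t <= T)%N ->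
        (forall k : 'I_T, (k < t)%N -> w k = w' k) -> D w t = D w' t].

Definition unif_prob (R : realType) (n T : nat)
  (E : {set {ffun 'I_T -> 'I_n}}) : R := #|E|%:R / (n ^ T)%:R.

(* Main.v *)
Require Import Defs.
From HB Require Import structures.
From mathcomp Require Import all_boot all_order all_algebra.
From mathcomp Require Import reals.
From mathcomp Require Import sequences exp.
From mathcomp Require Import ring lra.
Import Order.TTheory GRing.Theory Num.Theory.
Local Open Scope ring_scope.

Lemma expR_le_quad (R : realType) (y : R) : y <= 1/2 -> expR y <= 1 + y + 2 * y ^+ 2.
Proof.
move=> hy.
have h1 : 1 - y <= expR (- y) by have := expR_ge1Dx (- y); rewrite addrC.
have hpos : 0 < 1 - y by lra.
have e : expR y = (expR (-y))^-1 by rewrite expRN invrK.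
rewrite e.
have hq : 0 <= y ^+ 2 * (1 - 2 * y) by apply: mulr_ge0; [exact: sqr_ge0| lra].
apply: (@le_trans _ _ ((1 - y)^-1)).
  by rewrite lef_pV2 ?posrE ?expR_gt0.
rewrite -(@ler_pM2l _ (1 - y)) // mulrV ?unitfE ?gt_eqF //.
have -> : (1 - y) * (1 + y + 2 * y ^+ 2) = 1 + y ^+ 2 * (1 - 2 * y) by rewrite !expr2; ring.
lra.
Qed.
Definition phiv (R : realType) (A : Type) (n : nat) (i : 'I_n)
  (P1 : profile A n -> bool) (P2 : A -> bool) (d : profile A n) : R :=
  if P2 (d i) then 0 else (if P1 d then n%:R else n%:R - 1).
Definition ccv (R : realType) (A : Type) (n : nat) (i : 'I_n)
  (P1 : profile A n -> bool) (P2 : A -> bool) (d : profile A n) : R :=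
  if P1 d then (if P2 (d i) then 1 else 0) else (if P2 (d i) then 0 else -1).
Arguments phiv R {A n} i P1 P2 d.
Arguments ccv R {A n} i P1 P2 d.
Definition yv (R : realType) (A : Type) (n : nat) (i : 'I_n)
  (P1 : profile A n -> bool) (P2 : A -> bool) (d : profile A n) (j : 'I_n) : R :=
  ccv R i P1 P2 d * (if j == i then n%:R - 1 else -1).
Arguments yv R {A n} i P1 P2 d j.
Definition rv (R : realType) (A : Type) (n : nat) (i : 'I_n)
  (P1 : profile A n -> bool) (P2 : A -> bool) (d : profile A n) : R :=
  if P1 d || P2 (d i) then -1 else 1.

Arguments rv R {A n} i P1 P2 d.

Lemma step_bound (R : realType) (A : Type) (n : nat)
  (u : 'I_n -> profile A n -> R) (i : 'I_n)
  (P1 : profile A n -> bool) (P2 : A -> bool)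
  (P1_minus_i : forall p q : profile A n,
      (forall j, j != i -> p j = q j) -> P1 p = P1 q)
  (hyp : forall p : profile A n, ~~ P1 p ->
      forall d : A, best_response u i p d -> P2 d)
  (p q : profile A n) (j : 'I_n) :
  br_step u j p q ->
  rv R i P1 P2 q + phiv R i P1 P2 q - phiv R i P1 P2 p <= yv R i P1 P2 p j.
Proof.
case=> hsame hbr _.
have n1 : (1 <= n%:R :> R) by rewrite ler1n; exact: (leq_ltn_trans (leq0n _) (ltn_ord i)).
rewrite /rv /phiv /yv /ccv.
case: (eqVneq j i) => [eji|nji].
  subst j.
  have e1 : P1 p = P1 q by apply: P1_minus_i => k hk; rewrite hsame.
  have h2 : ~~ P1 p -> P2 (q i) by move=> h; exact: hyp h _ hbr.
  rewrite -e1; move: h2; rewrite ?eqxx.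
  by case: (P1 p); case: (P2 (p i)); case: (P2 (q i)) => //= h; rewrite ?eqxx; try lra; move: (h isT).
have e : q i = p i by apply: hsame; rewrite eq_sym.
rewrite e.
by case: (P1 p); case: (P2 (p i)); case: (P1 q) => /=; lra.
Qed.

Lemma mgf_step (R : realType) (A : Type) (n : nat) (i : 'I_n)
  (P1 : profile A n -> bool) (P2 : A -> bool) (d : profile A n) (lam : R) :
  0 <= lam -> lam * n%:R <= 1/2 ->
  \sum_(x : 'I_n) expR (lam * yv R i P1 P2 d x) <= n%:R * (1 + 2 * lam ^+ 2 * n%:R).
Proof.
move=> l0 ln.
have n0 : (0 < n)%N by exact: (leq_ltn_trans (leq0n _) (ltn_ord i)).
have n1 : (1 <= n%:R :> R) by rewrite ler1n.
rewrite (bigD1 i) //= /yv eqxx.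
rewrite (eq_bigr (fun _ => expR (lam * (ccv R i P1 P2 d * -1)))); last first.
  by move=> x /negbTE ->.
rewrite sumr_const.
have -> : #|[pred x | x != i]| = n.-1 by rewrite cardC1 card_ord.
rewrite -[_ *+ n.-1]mulr_natl.
have -> : (n.-1)%:R = n%:R - 1 :> R by rewrite -subn1 natrB.
set m := n%:R in n1 ln *.
have lm : lam <= 1/2 by nra.
rewrite /ccv; case: (P1 d); case: (P2 (d i)); rewrite ?mul0r ?mulr0 ?expR0.
- have h1 := @expR_le_quad R (lam * (1 * (m - 1))) ltac:(nra).
  have h2 := @expR_le_quad R (lam * (1 * -1)) ltac:(nra).
  have h3 : (m - 1) * expR (lam * (1 * -1)) <= (m - 1) * (1 + lam * (1 * -1) + 2 * (lam * (1 * -1)) ^+ 2).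
    by apply: ler_wpM2l => //; lra.
  apply: (le_trans (lerD h1 h3)).
  have hh : 0 <= lam * lam * m by apply: mulr_ge0; [apply: mulr_ge0 | lra].
  rewrite !expr2; nra.
- have hh : 0 <= lam * lam * m by apply: mulr_ge0; [apply: mulr_ge0 | lra].
  rewrite !expr2; nra.
- have hh : 0 <= lam * lam * m by apply: mulr_ge0; [apply: mulr_ge0 | lra].
  rewrite !expr2; nra.
- have h1 := @expR_le_quad R (lam * (-1 * (m - 1))) ltac:(nra).
  have h2 := @expR_le_quad R (lam * (-1 * -1)) ltac:(nra).
  have h3 : (m - 1) * expR (lam * (-1 * -1)) <= (m - 1) * (1 + lam * (-1 * -1) + 2 * (lam * (-1 * -1)) ^+ 2).
    by apply: ler_wpM2l => //; lra.
  apply: (le_trans (lerD h1 h3)).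
  have hh : 0 <= lam * lam * m by apply: mulr_ge0; [apply: mulr_ge0 | lra].
  rewrite !expr2; nra.
Qed.
Definition fupd (T n : nat) (w : {ffun 'I_T -> 'I_n}) (k : 'I_T) (z : 'I_n) :
  {ffun 'I_T -> 'I_n} := [ffun j => if j == k then z else w j].

Arguments fupd {T n}.

Lemma fiber (R : realType) (T n : nat) (k : 'I_T)
  (F : {ffun 'I_T -> 'I_n} -> 'I_n -> R) :
  (forall w z x, F (fupd w k z) x = F w x) ->
  n%:R * \sum_w F w (w k) = \sum_w \sum_x F w x.
Proof.
move=> Finv.
have swap : forall x y : 'I_n,
    \sum_(w : {ffun 'I_T -> 'I_n} | w k == y) F w x = \sum_(w : {ffun 'I_T -> 'I_n} | w k == x) F w x.
  move=> x y.
  pose s (v : 'I_n) : 'I_n := if v == x then y else if v == y then x else v.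
  have ss : forall v, s (s v) = v.
    move=> v; rewrite /s; case: (eqVneq v x) => [->|hx].
      by rewrite eqxx; case: (eqVneq y x) => [->|hyx] //; rewrite ?(negbTE hyx) ?eqxx.
    case: (eqVneq v y) => [->|hy]; first by rewrite eqxx.
    by rewrite (negbTE hx) (negbTE hy) ?(negbTE hx) ?(negbTE hy).
  pose sig (w : {ffun 'I_T -> 'I_n}) := fupd w k (s (w k)).
  have sigK : involutive sig.
    move=> w; apply/ffunP => j; rewrite /sig /fupd !ffunE eqxx.
    by case: (eqVneq j k) => [->|//]; rewrite ss.
  rewrite (reindex_inj (inv_inj sigK)) /=.
  apply: eq_big => w.
    rewrite /sig /fupd ffunE eqxx /s.
    case: (eqVneq (w k) x) => [e|hx]; first by rewrite eqxx.
    case: (eqVneq (w k) y) => [e|hy] //.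
    by apply/negbTE; rewrite e eq_sym in hx.
    by apply/negbTE.
  by move=> _; rewrite /sig Finv.
have part : forall G : {ffun 'I_T -> 'I_n} -> R,
    \sum_w G w = \sum_(y : 'I_n) \sum_(w : {ffun 'I_T -> 'I_n} | w k == y) G w.
  by move=> G; exact: (partition_big (fun w : {ffun 'I_T -> 'I_n} => w k) predT).
rewrite exchange_big /= (part (fun w => F w (w k))) mulr_sumr.
apply: eq_bigr => x _.
rewrite (part (fun w => F w x)).
rewrite [RHS](eq_bigr (fun y : 'I_n => \sum_(w : {ffun 'I_T -> 'I_n} | w k == x) F w x) (fun y _ => swap x y)).
rewrite sumr_const card_ord -[RHS]mulr_natl.
by congr (_ * _); apply: eq_bigr => w /eqP ->.
Qed.

Lemma prod_bound (R : realType) (A : Type) (n T : nat) (i : 'I_n)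
  (P1 : profile A n -> bool) (P2 : A -> bool)
  (D : {ffun 'I_T -> 'I_n} -> nat -> profile A n)
  (hna : forall (w w' : {ffun 'I_T -> 'I_n}) (t : nat), (t <= T)%N ->
        (forall k : 'I_T, (k < t)%N -> w k = w' k) -> D w t = D w' t)
  (lam : R) : 0 <= lam -> lam * n%:R <= 1/2 ->
  forall m, (m <= T)%N ->
  \sum_(w : {ffun 'I_T -> 'I_n})
     \prod_(t : 'I_T | (t < m)%N) expR (lam * yv R i P1 P2 (D w t) (w t))
   <= (n ^ T)%:R * (1 + 2 * lam ^+ 2 * n%:R) ^+ m.
Proof.
move=> l0 ln.
have n0 : (0 < n)%N by exact: (leq_ltn_trans (leq0n _) (ltn_ord i)).
elim=> [|m IH] hm.
  rewrite expr0 mulr1 (eq_bigr (fun _ => 1)); last by move=> w _; rewrite big_pred0.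
  by rewrite sumr_const card_ffun !card_ord -mulr_natl mulr1.
have hmT : (m < T)%N by exact: hm.
pose k := Ordinal hmT.
pose G (w : {ffun 'I_T -> 'I_n}) :=
  \prod_(t : 'I_T | (t < m)%N) expR (lam * yv R i P1 P2 (D w t) (w t)).
have split : forall w, \prod_(t : 'I_T | (t < m.+1)%N) expR (lam * yv R i P1 P2 (D w t) (w t))
    = G w * expR (lam * yv R i P1 P2 (D w k) (w k)).
  move=> w; rewrite (bigD1 k) /=; last by [].
  rewrite mulrC /G; congr (_ * _); apply: eq_bigl => t.
  by rewrite ltnS ltn_neqAle andbC -val_eqE.
have hfupd : forall w z t, (t <= m)%N -> D (fupd w k z) t = D w t.
  move=> w z t ht; apply: hna; first exact: (leq_trans ht (ltnW hmT)).
  move=> k' hk'; rewrite /fupd ffunE.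
  have -> : (k' == k) = false.
    apply/negbTE/eqP => e; move: hk'; rewrite e /= => hh.
    by move: (leq_trans hh ht); rewrite ltnn.
  by [].
have Ginv : forall w z, G (fupd w k z) = G w.
  move=> w z; apply: eq_bigr => t ht.
  rewrite hfupd; last exact: ltnW.
  rewrite /fupd ffunE.
  have -> : (t == k) = false by apply/negbTE; rewrite -val_eqE /= neq_ltn ht.
  by [].
have hsum := @fiber R T n k (fun w x => G w * expR (lam * yv R i P1 P2 (D w k) x))
  ltac:(by move=> w z x /=; rewrite Ginv hfupd).
rewrite (eq_bigr _ (fun w _ => split w)).
have npos : (0 < n%:R :> R) by rewrite ltr0n.
rewrite -(@ler_pM2l _ n%:R) // hsum /=.
have G0 : forall w, 0 <= G w by move=> w; apply: prodr_ge0 => t _; exact: expR_ge0.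
apply: (@le_trans _ _ (\sum_w G w * (n%:R * (1 + 2 * lam ^+ 2 * n%:R)))).
  apply: ler_sum => w _; rewrite -mulr_sumr; apply: ler_wpM2l => //.
  exact: mgf_step.
rewrite -mulr_suml.
have IH' := IH (ltnW hm).
set c := 1 + 2 * lam ^+ 2 * n%:R.
have c0 : 0 <= c.
  have : 0 <= lam ^+ 2 by exact: sqr_ge0.
  have : 0 <= n%:R :> R by exact: ler0n.
  rewrite /c; nra.
rewrite -/G in IH'.
set SG := \sum_w G w in IH' *.
have -> : SG * (n%:R * c) = n%:R * (SG * c) by ring.
apply: ler_wpM2l; first exact: ltW.
rewrite exprSr mulrA; by apply: ler_wpM2r.
Qed.

Lemma tele_bound (R : realType) (A : Type) (n T : nat)
  (u : 'I_n -> profile A n -> R) (i : 'I_n)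
  (P1 : profile A n -> bool) (P2 : A -> bool)
  (P1_minus_i : forall p q : profile A n,
      (forall j, j != i -> p j = q j) -> P1 p = P1 q)
  (hyp : forall p : profile A n, ~~ P1 p ->
      forall d : A, best_response u i p d -> P2 d)
  (D : {ffun 'I_T -> 'I_n} -> nat -> profile A n)
  (w : {ffun 'I_T -> 'I_n})
  (hstep : forall t : 'I_T, br_step u (w t) (D w t) (D w t.+1)) :
  T%:R - 2 * (#|[set t : 'I_T | P1 (D w t.+1) || P2 (D w t.+1 i)]|%:R : R)
  <= \sum_(t : 'I_T) yv R i P1 P2 (D w t) (w t) + n%:R.
Proof.
have n1 : (1 <= n%:R :> R) by rewrite ler1n; exact: (leq_ltn_trans (leq0n _) (ltn_ord i)).
pose f (t : nat) := phiv R i P1 P2 (D w t).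
have f0 : forall t, 0 <= f t by move=> t; rewrite /f /phiv; case: ifP => _; [|case: ifP => _]; lra.
have fn : forall t, f t <= n%:R by move=> t; rewrite /f /phiv; case: ifP => _; [|case: ifP => _]; lra.
have hs : \sum_(t : 'I_T) (rv R i P1 P2 (D w t.+1) + (f t.+1 - f t))
     <= \sum_(t : 'I_T) yv R i P1 P2 (D w t) (w t).
  apply: ler_sum => t _; rewrite /f addrA.
  exact: (@step_bound R A n u i P1 P2 P1_minus_i hyp _ _ _ (hstep t)).
rewrite big_split /= in hs.
have tel : \sum_(t : 'I_T) (f t.+1 - f t) = f T - f 0.
  by rewrite -(big_mkord xpredT (fun t => f t.+1 - f t)) telescope_sumr.
rewrite tel in hs.
have hr : \sum_(t : 'I_T) rv R i P1 P2 (D w t.+1)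
   = T%:R - 2 * (#|[set t : 'I_T | P1 (D w t.+1) || P2 (D w t.+1 i)]|%:R).
  rewrite -sum1_card natr_sum.
  rewrite (eq_bigr (fun t : 'I_T => 1 - 2 * ((P1 (D w t.+1) || P2 (D w t.+1 i))%:R : R))); last first.
    by move=> t _; rewrite /rv; case: (_ || _) => /=; lra.
  rewrite sumrB -mulr_sumr sumr_const card_ord.
  congr (_ - 2 * _).
  rewrite [RHS]big_mkcond /=; apply: eq_bigr => t _; rewrite inE.
  by case: (_ || _).
rewrite -hr.
have := f0 T; have := fn 0%N; lra.
Qed.

Theorem lemma4p2 (R : realType) (A : Type) (n : nat)
  (u : 'I_n -> profile A n -> R) (i : 'I_n)
  (P1 : profile A n -> bool) (P2 : A -> bool)
  (P1_minus_i : forall p q : profile A n,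
      (forall j, j != i -> p j = q j) -> P1 p = P1 q)
  (hyp : forall p : profile A n, ~~ P1 p ->
      forall d : A, best_response u i p d -> P2 d)
  (eps : R) (eps_gt0 : 0 < eps) (T : nat) (hT : n%:R / eps < T%:R)
  (d0 : profile A n) (D : {ffun 'I_T -> 'I_n} -> nat -> profile A n)
  (hD : br_dynamics u d0 D) :
  1 - expR (- (T%:R * eps ^+ 2) / (32 * n%:R)) <=
  unif_prob R
    [set w : {ffun 'I_T -> 'I_n} |
       (1 / 2 - eps) * T%:R <=
       #|[set t : 'I_T | P1 (D w t.+1) || P2 (D w t.+1 i)]|%:R].
Proof.
case: hD => _ hstep hna.
have n0 : (0 < n)%N by exact: (leq_ltn_trans (leq0n _) (ltn_ord i)).
have m1 : (1 <= n%:R :> R) by rewrite ler1n.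
have mpos : (0 < n%:R :> R) by rewrite ltr0n.
have hnT : n%:R < eps * T%:R.
  by move: hT; rewrite ltr_pdivrMr // mulrC.
set E := [set w : {ffun 'I_T -> 'I_n} | _].
have Npos : (0 < (n ^ T)%:R :> R) by rewrite ltr0n expn_gt0 n0.
have cardT : #|{ffun 'I_T -> 'I_n}| = (n ^ T)%N by rewrite card_ffun !card_ord.
rewrite /unif_prob ler_pdivlMr //.
have eE : #|E| = ((n ^ T) - #|~: E|)%N by rewrite -cardT -(cardsC E) addnK.
have leC : (#|~: E| <= n ^ T)%N by rewrite -cardT -(cardsC E) leq_addl.
rewrite eE natrB //.
set S := fun w : {ffun 'I_T -> 'I_n} => \sum_(t : 'I_T) yv R i P1 P2 (D w t) (w t).
have hC : forall w, w \in ~: E -> eps * T%:R < S w.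
  move=> w; rewrite !inE -ltNge => hlt.
  have := @tele_bound R A n T u i P1 P2 P1_minus_i hyp D w (hstep w).
  rewrite /S; lra.
case: (lerP (1 / 2) eps) => heps.
  have -> : #|~: E| = 0%N.
    apply/eqP; rewrite cards_eq0; apply/eqP/setP => w; rewrite !inE.
    apply/negbTE; rewrite negbK.
    apply: (@le_trans _ _ 0); last exact: ler0n.
    apply: mulr_le0_ge0; [lra | exact: ler0n].
  rewrite subr0 mulrBl mul1r lerBlDr lerDl.
  by apply: mulr_ge0; [exact: expR_ge0 | exact: ltW].
pose lam := eps / (4 * n%:R).
have l0 : 0 <= lam by rewrite /lam divr_ge0 //; lra.
have ln : lam * n%:R <= 1 / 2.
  have -> : lam * n%:R = eps / 4 by rewrite /lam; field; rewrite gt_eqF.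
  lra.
pose c := 1 + 2 * lam ^+ 2 * n%:R.
have hprod := @prod_bound R A n T i P1 P2 D hna lam l0 ln T (leqnn T).
have hsumexp : \sum_w expR (lam * S w) <= (n ^ T)%:R * c ^+ T.
  apply: le_trans hprod; rewrite le_eqVlt; apply/orP; left; apply/eqP; apply: eq_bigr => w _.
  rewrite /S mulr_sumr expR_sum; apply: eq_bigl => t; by rewrite ltn_ord.
have markov : #|~: E|%:R * expR (lam * (eps * T%:R)) <= \sum_w expR (lam * S w).
  apply: (@le_trans _ _ (\sum_(w in ~: E) expR (lam * S w))).
    rewrite mulr_natl -sumr_const; apply: ler_sum => w wE.
    by rewrite ler_expR; apply: ler_wpM2l => //; apply: ltW; apply: hC.
  rewrite [X in _ <= X](bigID (fun w => w \in ~: E)) /= lerDl.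
  by apply: sumr_ge0 => w _; exact: expR_ge0.
have cexp : c ^+ T <= expR (2 * lam ^+ 2 * n%:R * T%:R).
  rewrite expRM_natr; apply: lerXn2r; rewrite ?nnegrE.
  - rewrite /c; have := sqr_ge0 lam; nra.
  - exact: expR_ge0.
  - by rewrite /c; exact: expR_ge1Dx.
have key : #|~: E|%:R <= (n ^ T)%:R * expR (- (T%:R * eps ^+ 2) / (32 * n%:R)).
  have ep := expR_gt0 (lam * (eps * T%:R)).
  have h1 : #|~: E|%:R * expR (lam * (eps * T%:R)) <= (n ^ T)%:R * expR (2 * lam ^+ 2 * n%:R * T%:R).
    apply: (le_trans markov); apply: (le_trans hsumexp).
    by apply: ler_wpM2l; [exact: ltW|].
  have h2 : #|~: E|%:R <= (n ^ T)%:R * expR (2 * lam ^+ 2 * n%:R * T%:R - lam * (eps * T%:R)).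
    rewrite expRB mulrA ler_pdivlMr //.
  apply: (le_trans h2); apply: ler_wpM2l; first exact: ltW.
  rewrite ler_expR.
  have z0 : 0 <= T%:R * eps ^+ 2 / n%:R.
    by apply: divr_ge0; [apply: mulr_ge0; [exact: ler0n | exact: sqr_ge0] | exact: ltW].
  have e1 : 2 * lam ^+ 2 * n%:R * T%:R - lam * (eps * T%:R) = - (T%:R * eps ^+ 2 / n%:R) / 8.
    by rewrite /lam; field; rewrite gt_eqF.
  have e2 : - (T%:R * eps ^+ 2) / (32 * n%:R) = - (T%:R * eps ^+ 2 / n%:R) / 32.
    by field; rewrite gt_eqF.
  rewrite e1 e2; lra.
rewrite mulrBl mul1r; lra.
Qed.
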